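(* Let $E$ be a directed graph and let the graph inverse semigroup $G(E)$ carry a Hausdorff topology $\tau$ making it a semitopological semigroup. The following are equivalent: (1) $(G(E),\tau)$ is compact; (2) it is countably compact; (3) it is feebly compact; (4) it is CLP-compact; (5) $(G(E),\tau)$ is topologically isomorphic to $(G(E),\tau_c)$.
   Context: All spaces are Hausdorff. A semitopological semigroup is a topological space with a separately continuous associative multiplication. A space is countably compact if every infinite subset has an accumulation point; feebly compact if every locally finite family of non-empty open sets is finite; CLP-compact if every cover by clopen sets has a finite subcover. A directed graph $E=(E^0,E^1,r,s)$ has vertices $E^0$, edges $E^1$, source/range maps $s,r:E^1\to E^0$; paths are vertices and sequences of edges $e_1\ldots e_n$ with $r(e_i)=s(e_{i+1})$. The graph inverse semigroup $G(E)$ is the semigroup with zero $0$ generated by $E^0$, $E^1$, $E^{-1}=\{e^{-1}\mid e\in E^1\}$ subject to: for $a,b\in E^0$, $e,f\in E^1$: $ab=a$ if $a=b$, else $0$; $s(e)e=er(e)=e$; $e^{-1}s(e)=r(e)e^{-1}=e^{-1}$; $e^{-1}f=r(e)$ if $e=f$, else $0$. The topology $\tau_c$ on $G(E)$: non-zero elements are isolated and the open neighborhoods of $0$ are the cofinite subsets containing $0$. *)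

(* Defs.v *)
From Stdlib Require Import List ClassicalEpsilon.
Import ListNotations.


Record graph := Graph {
  vert : Type;
  edge : Type;
  src : edge -> vert;
  rng : edge -> vert }.

(** A path is represented by its source vertex together with its (possibly
    empty) list of edges; the empty list gives the vertex (trivial path). *)
Definition path (E : graph) : Type := (vert E * list (edge E))%type.

Fixpoint chain (E : graph) (l : list (edge E)) : Prop :=
  match l with
  | e :: ((f :: _) as t) => rng E e = src E f /\ chain E t
  | _ => True
  end.

Definition valid_path (E : graph) (p : path E) : Prop :=
  match snd p with
  | [] => True
  | e :: _ => src E e = fst p /\ chain E (snd p)
  end.

Definition prange (E : graph) (p : path E) : vert E :=
  last (map (rng E) (snd p)) (fst p).

Definition pcat (E : graph) (p : path E) (q : list (edge E)) : path E :=
  (fst p, snd p ++ q).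

(** * The graph inverse semigroup G(E), in its standard normal form:
    0 (= None) and the elements u v^{-1} (= Some (u, v)) with u, v paths,
    r(u) = r(v). *)
Definition GE_valid (E : graph) (uv : path E * path E) : Prop :=
  valid_path E (fst uv) /\ valid_path E (snd uv) /\
  prange E (fst uv) = prange E (snd uv).

Definition GE (E : graph) : Type := option {uv : path E * path E | GE_valid E uv}.

Definition GE_zero (E : graph) : GE E := None.

Definition mkGE (E : graph) (u v : path E) : GE E :=
  match excluded_middle_informative (GE_valid E (u, v)) with
  | left H => Some (exist _ (u, v) H)
  | right _ => None
  end.

Definition GE_vert (E : graph) (v : vert E) : GE E := mkGE E (v, []) (v, []).
Definition GE_edge (E : graph) (e : edge E) : GE E :=
  mkGE E (src E e, [e]) (rng E e, []).
Definition GE_inv_edge (E : graph) (e : edge E) : GE E :=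
  mkGE E (rng E e, []) (src E e, [e]).

Definition pref (E : graph) (b c : path E) : option (list (edge E)) :=
  match excluded_middle_informative
          (exists q, fst c = fst b /\ snd c = snd b ++ q) with
  | left H => Some (proj1_sig (constructive_indefinite_description _ H))
  | right _ => None
  end.

(** (a b^{-1})(c d^{-1}) = (a q) d^{-1} if c = b q;
                         = a (d q)^{-1} if b = c q;
                         = 0 otherwise. *)
Definition GE_mul (E : graph) (x y : GE E) : GE E :=
  match x, y with
  | Some x', Some y' =>
      let a := fst (proj1_sig x') in let b := snd (proj1_sig x') in
      let c := fst (proj1_sig y') in let d := snd (proj1_sig y') in
      match pref E b c with
      | Some q => mkGE E (pcat E a q) d
      | None =>
          match pref E c b with
          | Some q => mkGE E a (pcat E d q)
          | None => None
          end
      end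
  | _, _ => None
  end.

Section Topology.
Variable X : Type.
Definition fam := (X -> Prop) -> Prop.

Definition is_topology (tau : fam) : Prop :=
  tau (fun _ => False) /\ tau (fun _ => True) /\
  (forall U V, tau U -> tau V -> tau (fun x => U x /\ V x)) /\
  (forall F : fam, (forall U, F U -> tau U) -> tau (fun x => exists U, F U /\ U x)).

Definition hausdorff (tau : fam) : Prop :=
  forall x y : X, x <> y ->
    exists U V, tau U /\ tau V /\ U x /\ V y /\ (forall z, ~ (U z /\ V z)).

Definition finite_set (A : X -> Prop) : Prop := exists l : list X, forall x, A x -> In x l.

Definition finite_fam (F : fam) : Prop :=
  exists l : list (X -> Prop), forall U, F U -> In U l.

Definition covers (F : fam) : Prop := forall x, exists U, F U /\ U x.

Definition compact (tau : fam) : Prop :=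
  forall F : fam, (forall U, F U -> tau U) -> covers F ->
    exists l : list (X -> Prop), (forall U, In U l -> F U) /\
      (forall x, exists U, In U l /\ U x).

Definition accumulation_point (tau : fam) (A : X -> Prop) (x : X) : Prop :=
  forall U, tau U -> U x -> exists y, A y /\ y <> x /\ U y.

Definition countably_compact (tau : fam) : Prop :=
  forall A : X -> Prop, ~ finite_set A -> exists x, accumulation_point tau A x.

Definition locally_finite (tau : fam) (F : fam) : Prop :=
  forall x, exists U, tau U /\ U x /\
    finite_fam (fun V => F V /\ exists y, U y /\ V y).

Definition feebly_compact (tau : fam) : Prop :=
  forall F : fam, (forall U, F U -> tau U /\ exists x, U x) ->
    locally_finite tau F -> finite_fam F.

Definition clopen (tau : fam) (U : X -> Prop) : Prop :=
  tau U /\ tau (fun x => ~ U x).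

Definition CLP_compact (tau : fam) : Prop :=
  forall F : fam, (forall U, F U -> clopen tau U) -> covers F ->
    exists l : list (X -> Prop), (forall U, In U l -> F U) /\
      (forall x, exists U, In U l /\ U x).
End Topology.

Definition continuous_map (X Y : Type) (tX : fam X) (tY : fam Y) (f : X -> Y) : Prop :=
  forall V, tY V -> tX (fun x => V (f x)).

Definition semitopological (S : Type) (mul : S -> S -> S) (tau : fam S) : Prop :=
  forall a, continuous_map S S tau tau (fun x => mul a x) /\
            continuous_map S S tau tau (fun x => mul x a).

(** The topology tau_c on G(E): non-zero elements isolated, neighbourhoods of 0
    are the cofinite sets containing 0. *)
Definition tau_c (E : graph) : fam (GE E) :=
  fun U => U (GE_zero E) -> finite_set (GE E) (fun x => ~ U x).

Definition top_iso (E : graph) (tau tau' : fam (GE E)) : Prop :=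
  exists (h g : GE E -> GE E),
    (forall x, g (h x) = x) /\ (forall y, h (g y) = y) /\
    (forall x y, h (GE_mul E x y) = GE_mul E (h x) (h y)) /\
    continuous_map (GE E) (GE E) tau tau' h /\ continuous_map (GE E) (GE E) tau' tau g.

(* Main.v *)
Require Import Defs.
From Stdlib Require Import List ClassicalEpsilon Classical FunctionalExtensionality PropExtensionality ProofIrrelevance Lia PeanoNat.
Import ListNotations.

Section Alg.
Variable E : graph.

Lemma pref_some (b c : path E) q : pref E b c = Some q -> fst c = fst b /\ snd c = snd b ++ q.
Proof.
  unfold pref. destruct (excluded_middle_informative _) as [H|H]; [|discriminate].
  intro Heq. pose proof (proj2_sig (constructive_indefinite_description _ H)) as Hq.
  cbv beta in Hq. injection Heq as Heq. rewrite Heq in Hq. exact Hq.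
Qed.

Lemma pref_complete (b c : path E) q : fst c = fst b -> snd c = snd b ++ q -> pref E b c = Some q.
Proof.
  intros H1 H2. unfold pref. destruct (excluded_middle_informative _) as [H|H].
  - f_equal. pose proof (proj2_sig (constructive_indefinite_description _ H)) as [_ Hq'].
    cbv beta in Hq'. apply (app_inv_head (snd b)). rewrite <- Hq'. exact H2.
  - exfalso. apply H. eauto.
Qed.

Lemma mkGE_some u w r : mkGE E u w = Some r -> proj1_sig r = (u, w).
Proof.
  unfold mkGE. destruct (excluded_middle_informative _); [|discriminate].
  intro H. injection H as <-. reflexivity.
Qed.

Lemma mkGE_eq u w r : proj1_sig r = (u, w) -> mkGE E u w = Some r.
Proof.
  destruct r as [p Hp]. simpl. intros ->. unfold mkGE.
  destruct (excluded_middle_informative _) as [H|H].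
  - rewrite (proof_irrelevance _ H Hp). reflexivity.
  - contradiction.
Qed.

Lemma mkGE_valid u w (H : GE_valid E (u, w)) : mkGE E u w = Some (exist _ (u, w) H).
Proof. apply mkGE_eq. reflexivity. Qed.

Lemma mul_None_l y : GE_mul E None y = None.
Proof. reflexivity. Qed.
Lemma mul_None_r x : GE_mul E x None = None.
Proof. destruct x; reflexivity. Qed.

Lemma mul_unfold a b c d Hx Hy :
  GE_mul E (Some (exist _ (a, b) Hx)) (Some (exist _ (c, d) Hy)) =
  match pref E b c with
  | Some q => mkGE E (pcat E a q) d
  | None => match pref E c b with
            | Some q => mkGE E a (pcat E d q)
            | None => None end end.
Proof. reflexivity. Qed.

Lemma mul_c1 a b c d Hx Hy q : fst c = fst b -> snd c = snd b ++ q ->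
  GE_mul E (Some (exist _ (a, b) Hx)) (Some (exist _ (c, d) Hy)) = mkGE E (pcat E a q) d.
Proof. intros. rewrite mul_unfold, (pref_complete b c q) by auto. reflexivity. Qed.

Lemma mul_c2 a b c d Hx Hy q :
  (forall q', ~ (fst c = fst b /\ snd c = snd b ++ q')) -> fst b = fst c -> snd b = snd c ++ q ->
  GE_mul E (Some (exist _ (a, b) Hx)) (Some (exist _ (c, d) Hy)) = mkGE E a (pcat E d q).
Proof.
  intros Hn H1 H2. rewrite mul_unfold. destruct (pref E b c) eqn:Hp.
  - apply pref_some in Hp. exfalso. eapply Hn; eauto.
  - rewrite (pref_complete c b q) by auto. reflexivity.
Qed.

Lemma mul_spec a b c d Hx Hy r :
  GE_mul E (Some (exist _ (a, b) Hx)) (Some (exist _ (c, d) Hy)) = Some r ->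
  (exists q, fst c = fst b /\ snd c = snd b ++ q /\ proj1_sig r = (pcat E a q, d)) \/
  (exists q, fst b = fst c /\ snd b = snd c ++ q /\ proj1_sig r = (a, pcat E d q)).
Proof.
  rewrite mul_unfold. destruct (pref E b c) eqn:Hp.
  - intro H. apply pref_some in Hp. left. exists l. destruct Hp. apply mkGE_some in H. auto.
  - destruct (pref E c b) eqn:Hp2; [|discriminate].
    intro H. apply pref_some in Hp2. right. exists l. destruct Hp2. apply mkGE_some in H. auto.
Qed.

Lemma mul_nz a b c d Hx Hy :
  GE_mul E (Some (exist _ (a, b) Hx)) (Some (exist _ (c, d) Hy)) <> None ->
  (exists q, fst c = fst b /\ snd c = snd b ++ q) \/
  (exists q, fst b = fst c /\ snd b = snd c ++ q).
Proof.
  destruct (GE_mul _ _ _) eqn:H; [|congruence]. intros _.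
  apply mul_spec in H. destruct H as [[q [? [? _]]]|[q [? [? _]]]]; eauto.
Qed.

Lemma idem_r a b c Hx Hy t : fst b = fst c -> snd b = snd c ++ t ->
  GE_mul E (Some (exist _ (a, b) Hx)) (Some (exist _ (c, c) Hy)) = Some (exist _ (a, b) Hx).
Proof.
  intros H1 H2. rewrite mul_unfold. destruct (pref E b c) eqn:Hp.
  - apply pref_some in Hp as [H3 H4]. rewrite H2 in H4.
    assert (Ht : t ++ l = []).
    { apply (app_inv_head (snd c)). rewrite app_assoc, <- H4, app_nil_r. reflexivity. }
    apply app_eq_nil in Ht as [-> ->]. apply mkGE_eq. simpl.
    destruct a as [a0 a1], b as [b0 b1], c as [c0 c1]; simpl in *. subst.
    unfold pcat; simpl. rewrite !app_nil_r. reflexivity.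
  - rewrite (pref_complete c b t) by auto. apply mkGE_eq. simpl.
    destruct b as [b0 b1], c as [c0 c1]; simpl in *. subst. reflexivity.
Qed.

Lemma idem_l a b c Hx Hy t : fst a = fst c -> snd a = snd c ++ t ->
  GE_mul E (Some (exist _ (c, c) Hy)) (Some (exist _ (a, b) Hx)) = Some (exist _ (a, b) Hx).
Proof.
  intros H1 H2. rewrite (mul_c1 _ _ _ _ _ _ t) by auto. apply mkGE_eq. simpl.
  destruct a as [a0 a1], c as [c0 c1]; simpl in *. subst. reflexivity.
Qed.

Lemma some_inj p1 p2 h1 h2 : (Some (exist _ p1 h1) : GE E) = Some (exist _ p2 h2) -> p1 = p2.
Proof.
  intro H. apply (f_equal (fun o : GE E => match o with Some s => proj1_sig s | None => p1 end)) in H.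
  exact H.
Qed.

End Alg.

Section Top.
Variable E : graph.
Notation X := (GE E).

Definition sing (x : X) : X -> Prop := fun z => z = x.
Definition pickpt (W : X -> Prop) : X := epsilon (inhabits None) W.

Lemma pickpt_sing x : pickpt (sing x) = x.
Proof. exact (epsilon_spec (inhabits None) (sing x) (ex_intro _ x eq_refl)). Qed.

Definition PP (t : fam X) : Prop :=
  forall U, t U -> U None -> finite_set X (fun x => ~ U x).

Lemma cover_list (F : fam X) : covers X F -> forall c : list X,
  exists l, (forall W, In W l -> F W) /\ forall x, In x c -> exists W, In W l /\ W x.
Proof.
  intros Hcov c. induction c as [|a c IH].
  - exists []. split; intros; contradiction.
  - destruct IH as [l [H1 H2]]. destruct (Hcov a) as [W [HW HWa]].
    exists (W :: l). split.
    + intros U [<-|HU]; auto.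
    + intros x [<-|Hx].
      * exists W. simpl. auto.
      * destruct (H2 x Hx) as [W' [? ?]]. exists W'. simpl. auto.
Qed.

Lemma P_compact t : PP t -> compact X t.
Proof.
  intros HP F HF Hcov. destruct (Hcov None) as [U0 [HU0 HU0n]].
  destruct (HP U0 (HF _ HU0) HU0n) as [c Hc].
  destruct (cover_list F Hcov c) as [l [Hl1 Hl2]].
  exists (U0 :: l). split.
  - intros U [<-|HU]; auto.
  - intro x. destruct (classic (U0 x)) as [H|H].
    + exists U0. simpl. auto.
    + destruct (Hl2 x (Hc x H)) as [W [? ?]]. exists W. simpl. auto.
Qed.

Lemma P_cc t : PP t -> countably_compact X t.
Proof.
  intros HP A HA. exists None. intros U HU HU0. apply NNPP. intro Hno. apply HA.
  destruct (HP U HU HU0) as [c Hc]. exists (None :: c). intros y Hy.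
  destruct y as [s|].
  - right. apply Hc. intro HUy. apply Hno. exists (Some s). repeat split; auto. discriminate.
  - left. reflexivity.
Qed.

Lemma P_feeb t : PP t -> feebly_compact X t.
Proof.
  intros HP F HF Hlf.
  assert (Hloc : forall x, exists l, forall V, F V -> V x -> In V l).
  { intros x. destruct (Hlf x) as [W [HW [HWx [l Hl]]]]. exists l.
    intros V HV HVx. apply Hl. split; auto. exists x. auto. }
  assert (Hlist : forall c : list X, exists L, forall x V, In x c -> F V -> V x -> In V L).
  { induction c as [|a c IH].
    - exists []. intros; contradiction.
    - destruct IH as [L HL]. destruct (Hloc a) as [la Hla]. exists (la ++ L).
      intros x V [<-|Hx] HV HVx; apply in_or_app; [left; auto | right; eauto]. }
  destruct (Hlf None) as [W0 [HW0 [HW0n [l0 Hl0]]]].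
  destruct (HP W0 HW0 HW0n) as [c Hc]. destruct (Hlist c) as [L HL].
  exists (l0 ++ L). intros V HV. destruct (HF V HV) as [_ [y Hy]]. apply in_or_app.
  destruct (classic (W0 y)) as [H|H].
  - left. apply Hl0. split; auto. exists y. auto.
  - right. apply (HL y V); auto.
Qed.

Lemma P_clp t : PP t -> CLP_compact X t.
Proof.
  intros HP F HF Hcov. apply (P_compact t HP F); auto.
  intros U HU. apply (HF U HU).
Qed.

Lemma tauc_P : PP (tau_c E).
Proof. intros U HU HU0. exact (HU HU0). Qed.

Lemma iso_compact tau : top_iso E tau (tau_c E) -> compact X tau.
Proof.
  intros [h [g [Hgh [Hhg [_ [Hh Hg]]]]]] F HF Hcov.
  pose proof (P_compact _ tauc_P) as Hcc.
  destruct (Hcc (fun W => exists V, F V /\ W = fun y => V (g y))) as [l' [Hl'1 Hl'2]].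
  - intros W [V [HV ->]]. apply Hg. auto.
  - intro y. destruct (Hcov (g y)) as [V [HV HVy]]. exists (fun y => V (g y)). eauto.
  - exists (map (fun W => fun x => W (h x)) l'). split.
    + intros U HU. apply in_map_iff in HU. destruct HU as [W [<- HW]].
      destruct (Hl'1 W HW) as [V [HV ->]].
      replace (fun x => V (g (h x))) with V; auto.
      apply functional_extensionality. intro x. rewrite Hgh. reflexivity.
    + intro x. destruct (Hl'2 (h x)) as [W [HW HWx]]. exists (fun x => W (h x)).
      split; auto. apply in_map_iff. eauto.
Qed.

Variable tau : fam X.
Hypothesis Htop : is_topology X tau.
Hypothesis Hh : hausdorff X tau.
Hypothesis Hs : semitopological X (GE_mul E) tau.

Lemma open_inter U V : tau U -> tau V -> tau (fun x => U x /\ V x).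
Proof. destruct Htop as [_ [_ [H _]]]. apply H. Qed.

Lemma open_full : tau (fun _ => True).
Proof. destruct Htop as [_ [H _]]. exact H. Qed.

Lemma open_ext U V : tau U -> (forall x, U x <-> V x) -> tau V.
Proof.
  intros HU H. replace V with U; auto.
  apply functional_extensionality. intro x. apply propositional_extensionality. apply H.
Qed.

Lemma open_local V : (forall x, V x -> exists U, tau U /\ U x /\ forall y, U y -> V y) -> tau V.
Proof.
  intros H. destruct Htop as [_ [_ [_ Hu]]].
  apply open_ext with (fun x => exists U, (tau U /\ forall y, U y -> V y) /\ U x).
  - apply Hu. intros U [? ?]; auto.
  - intro x. split.
    + intros [U [[_ HU] Hx]]. auto.
    + intro Hx. destruct (H x Hx) as [U [? [? ?]]]. exists U. auto.
Qed.

Lemma cont_l a V : tau V -> tau (fun x => V (GE_mul E a x)).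
Proof. apply (proj1 (Hs a)). Qed.
Lemma cont_r a V : tau V -> tau (fun x => V (GE_mul E x a)).
Proof. apply (proj2 (Hs a)). Qed.

Lemma sep_list x (L : list X) : exists U, tau U /\ U x /\ forall y, In y L -> y <> x -> ~ U y.
Proof.
  induction L as [|y L IH].
  - exists (fun _ => True). split; [apply open_full|]. split; auto.
  - destruct IH as [U [HU [HUx HUL]]].
    destruct (classic (y = x)) as [->|Hyx].
    + exists U. split; auto. split; auto. intros z [Hz|Hz] Hzx; [congruence| auto].
    + destruct (Hh x y (fun e => Hyx (eq_sym e))) as [U1 [V1 [HU1 [HV1 [HU1x [HV1y Hd]]]]]].
      exists (fun z => U z /\ U1 z). split; [apply open_inter; auto|]. split; auto.
      intros z [Hz|Hz] Hzx [Hz1 Hz2].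
      * subst z. apply (Hd y). auto.
      * apply (HUL z Hz Hzx Hz1).
Qed.

Lemma fix_open f : (forall V, tau V -> tau (fun x => V (f x))) -> tau (fun z => f z <> z).
Proof.
  intros Hf. apply open_local. intros z Hz.
  destruct (Hh _ _ Hz) as [U [V [HU [HV [HUz [HVz Hd]]]]]].
  exists (fun w => U (f w) /\ V w). split; [apply open_inter; auto|]. split; auto.
  intros w [H1 H2]; cbv beta; intro Heq. rewrite Heq in H1. apply (Hd w). auto.
Qed.

Lemma open_sing_of O x : tau O -> O x -> (forall z, O z -> z = x) -> tau (sing x).
Proof.
  intros HO HOx H. apply open_ext with O; auto.
  intro z. split; [intro Hz; apply H; exact Hz| intro Hz; unfold sing in Hz; subst; auto].
Qed.


Lemma edge_lemma v f (Hf : src E f = v)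
  (Hv : GE_valid E ((v, []), (v, []))) :
  exists O, tau O /\ O (Some (exist _ ((v, []), (v, [])) Hv)) /\
    forall c d H, O (Some (exist _ (c, d) H)) ->
      (forall e' t, snd d = e' :: t -> e' = f) /\ (forall e' t, snd c = e' :: t -> e' = f).
Proof.
  assert (Hfe : GE_valid E ((v, [f]), (rng E f, []))).
  { split; [split; [exact Hf | exact I] | split; [exact I | reflexivity]]. }
  assert (Hfi : GE_valid E ((rng E f, []), (v, [f]))).
  { split; [exact I | split; [split; [exact Hf | exact I] | reflexivity]]. }
  set (xv := Some (exist _ ((v, []), (v, [])) Hv) : X).
  set (fe := Some (exist _ ((v, [f]), (rng E f, [])) Hfe) : X).
  set (fi := Some (exist _ ((rng E f, []), (v, [f])) Hfi) : X).
  destruct (Hh fe None ltac:(discriminate)) as [U1 [W1 [HU1 [_ [HU1x [HW1 Hd1]]]]]].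
  destruct (Hh fi None ltac:(discriminate)) as [U2 [W2 [HU2 [_ [HU2x [HW2 Hd2]]]]]].
  exists (fun z => U1 (GE_mul E z fe) /\ U2 (GE_mul E fi z)). split.
  { apply open_inter; [apply cont_r | apply cont_l]; auto. }
  split.
  - split.
    + unfold xv, fe. rewrite (mul_c1 E _ _ _ _ _ _ [f]) by reflexivity.
      rewrite (mkGE_eq E _ _ (exist _ _ Hfe)) by reflexivity. exact HU1x.
    + unfold xv, fi. rewrite (mul_c2 E _ _ _ _ _ _ [f]).
      * rewrite (mkGE_eq E _ _ (exist _ _ Hfi)) by reflexivity. exact HU2x.
      * intros q' [_ Hq]. discriminate.
      * reflexivity.
      * reflexivity.
  - intros c d H [H1 H2]. split.
    + intros e' t Hd.
      assert (Hnz : GE_mul E (Some (exist _ (c, d) H)) fe <> None).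
      { intro Hc. apply (Hd1 None). split; [|exact HW1]. rewrite <- Hc. exact H1. }
      apply mul_nz in Hnz. rewrite Hd in Hnz. simpl in Hnz.
      destruct Hnz as [[q [_ Hq]]|[q [_ Hq]]]; injection Hq; auto.
    + intros e' t Hc.
      assert (Hnz : GE_mul E fi (Some (exist _ (c, d) H)) <> None).
      { intro Hc'. apply (Hd2 None). split; [|exact HW2]. rewrite <- Hc'. exact H2. }
      apply mul_nz in Hnz. rewrite Hc in Hnz. simpl in Hnz.
      destruct Hnz as [[q [_ Hq]]|[q [_ Hq]]]; injection Hq; auto.
Qed.


Lemma vert_open v : tau (sing (GE_vert E v)).
Proof.
  assert (Hv : GE_valid E ((v, []), (v, []))).
  { split; [exact I | split; [exact I | reflexivity]]. }
  assert (Exv : GE_vert E v = Some (exist _ ((v, []), (v, [])) Hv)) by apply mkGE_valid.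
  rewrite Exv.
  set (xv := Some (exist _ ((v, []), (v, [])) Hv) : X).
  assert (Hidem : GE_mul E xv xv = xv).
  { unfold xv. rewrite (mul_c1 E _ _ _ _ _ _ []) by reflexivity. exact Exv. }
  destruct (Hh xv None ltac:(discriminate)) as [U0 [W0 [HU0 [_ [HU0x [HW0 Hd0]]]]]].
  set (O1 := fun z => U0 (GE_mul E (GE_mul E xv z) xv)).
  assert (HO1 : tau O1).
  { exact (cont_l xv _ (cont_r xv _ HU0)). }
  assert (HO1x : O1 xv) by (unfold O1; rewrite !Hidem; exact HU0x).
  assert (key1 : forall z, O1 z -> exists c d H, z = Some (exist _ (c, d) H) /\ fst c = v /\ fst d = v).
  { intros z Hz. unfold O1 in Hz.
    assert (Hnz : GE_mul E (GE_mul E xv z) xv <> None).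
    { intro Hc. apply (Hd0 None). split; [|exact HW0]. rewrite <- Hc. exact Hz. }
    clear Hz.
    destruct z as [[[c d] H]|]; [| rewrite mul_None_r in Hnz; contradiction].
    exists c, d, H. split; [reflexivity|].
    revert Hnz. destruct (GE_mul E xv (Some (exist _ (c, d) H))) as [s|] eqn:E1; intro Hnz;
      [| contradiction].
    unfold xv in E1. apply mul_spec in E1. destruct s as [[a1 d1] Hs1].
    unfold xv in Hnz. apply mul_nz in Hnz.
    destruct E1 as [[q [H1 [H2 H3]]]|[q [H1 [H2 H3]]]]; simpl in H1, H3; injection H3 as -> ->;
      (split; [congruence|]);
      destruct Hnz as [[q' [H4 H5]]|[q' [H4 H5]]]; simpl in H4; congruence. }
  assert (fin : forall c d H, fst c = v -> fst d = v -> snd c = [] -> snd d = [] ->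
                  Some (exist _ (c, d) H) = xv).
  { intros [c0 c1] [d0 d1] H; simpl; intros -> -> -> ->. unfold xv.
    rewrite (proof_irrelevance _ H Hv). reflexivity. }
  destruct (classic (exists e, src E e = v)) as [[e He]|Hno].
  2: { apply (open_sing_of O1); auto. intros z Hz.
       destruct (key1 z Hz) as [c [d [H [-> [Hc Hd]]]]].
       pose proof H as [Hvc [Hvd _]].
       apply fin; auto.
       - destruct c as [c0 [|e1 c1]]; auto. simpl in Hvc, Hc. exfalso. apply Hno. exists e1. 
         destruct Hvc as [H0 _]. cbn in H0, Hc. congruence.
       - destruct d as [d0 [|e1 d1]]; auto. simpl in Hvd, Hd. exfalso. apply Hno. exists e1.
         destruct Hvd as [H0 _]. cbn in H0, Hd. congruence. }
  destruct (classic (exists f, src E f = v /\ f <> e)) as [[f [Hf Hfe]]|Hone].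
  - destruct (edge_lemma v e He Hv) as [Oe [HOe [HOex HOe']]].
    destruct (edge_lemma v f Hf Hv) as [Of [HOf [HOfx HOf']]].
    apply (open_sing_of (fun z => O1 z /\ Oe z /\ Of z)).
    + apply open_inter; auto. apply open_inter; auto.
    + split; auto.
    + intros z [Hz [Hze Hzf]].
      destruct (key1 z Hz) as [c [d [H [-> [Hc Hd]]]]].
      destruct (HOe' c d H Hze) as [Ae Be]. destruct (HOf' c d H Hzf) as [Af Bf].
      apply fin; auto.
      * destruct (snd c) as [|e1 t] eqn:Ec; auto. exfalso. apply Hfe.
        assert (e1 = f) by (apply (Bf e1 t); auto). assert (e1 = e) by (apply (Be e1 t); auto). congruence.
      * destruct (snd d) as [|e1 t] eqn:Ed; auto. exfalso. apply Hfe.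
        assert (e1 = f) by (apply (Af e1 t); auto). assert (e1 = e) by (apply (Ae e1 t); auto). congruence.
  - assert (Hone' : forall f, src E f = v -> f = e).
    { intros f Hf. apply NNPP. intro Hn. apply Hone. eauto. }
    assert (Hee : GE_valid E ((v, [e]), (v, [e]))).
    { split; [split; [exact He | exact I] | split; [split; [exact He | exact I] | reflexivity]]. }
    set (ee := Some (exist _ ((v, [e]), (v, [e])) Hee) : X).
    assert (Hneq : ee <> xv).
    { intro Heq. apply some_inj in Heq. discriminate. }
    apply (open_sing_of (fun z => O1 z /\ GE_mul E z ee <> z /\ GE_mul E ee z <> z)).
    + apply open_inter; auto. apply open_inter; apply fix_open.
      * intros V HV. apply cont_r. auto.
      * intros V HV. apply cont_l. auto.
    + split; auto. split.
      * unfold xv, ee. rewrite (mul_c1 E _ _ _ _ _ _ [e]) by reflexivity.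
        rewrite (mkGE_eq E _ _ (exist _ _ Hee)) by reflexivity. exact Hneq.
      * unfold xv, ee. rewrite (mul_c2 E _ _ _ _ _ _ [e]).
        -- rewrite (mkGE_eq E _ _ (exist _ _ Hee)) by reflexivity. exact Hneq.
        -- intros q' [_ Hq]. discriminate.
        -- reflexivity.
        -- reflexivity.
    + intros z [Hz [HR HL]].
      destruct (key1 z Hz) as [c [d [H [-> [Hc Hd]]]]].
      pose proof H as [Hvc [Hvd _]].
      apply fin; auto.
      * destruct c as [c0 [|e1 c1]]; auto. destruct Hvc as [Hs1 _]. cbn in Hs1, Hc.
        assert (e1 = e) by (apply Hone'; congruence). subst e1.
        exfalso. apply HL. unfold ee. apply (idem_l E _ _ _ _ _ c1); simpl; auto.
      * destruct d as [d0 [|e1 d1]]; auto. destruct Hvd as [Hs1 _]. cbn in Hs1, Hd.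
        assert (e1 = e) by (apply Hone'; congruence). subst e1.
        exfalso. apply HR. unfold ee. apply (idem_r E _ _ _ _ _ d1); simpl; auto.
Qed.


Lemma firstn_pre {A} (s t : list A) : firstn (length s) (s ++ t) = s.
Proof.
  rewrite firstn_app, firstn_all, Nat.sub_diag. simpl. apply app_nil_r.
Qed.

Lemma sing_open x : x <> None -> tau (sing x).
Proof.
  destruct x as [[[a b] Hx]|]; [intros _ | congruence].
  pose proof Hx as [Hva [Hvb Hpr]].
  assert (Hai : GE_valid E ((prange E a, []), a)).
  { split; [exact I | split; [exact Hva | reflexivity]]. }
  assert (Hbb : GE_valid E (b, (prange E b, []))).
  { split; [exact Hvb | split; [exact I | reflexivity]]. }
  set (ainv := Some (exist _ ((prange E a, []), a) Hai) : X).
  set (bb := Some (exist _ (b, (prange E b, [])) Hbb) : X).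
  set (xv := GE_vert E (prange E a)).
  assert (Hv : GE_valid E ((prange E a, []), (prange E a, []))).
  { split; [exact I | split; [exact I | reflexivity]]. }
  assert (Exv : xv = Some (exist _ ((prange E a, []), (prange E a, [])) Hv)) by apply mkGE_valid.
  set (O := fun z => GE_mul E (GE_mul E ainv z) bb = xv).
  assert (HO : tau O) by exact (cont_l ainv _ (cont_r bb _ (vert_open (prange E a)))).
  assert (HOx : O (Some (exist _ (a, b) Hx))).
  { unfold O, ainv. rewrite (mul_c1 E _ _ _ _ _ _ []) by (simpl; auto using app_nil_r).
    assert (H1 : GE_valid E ((prange E a, []), b)).
    { split; [exact I | split; [exact Hvb | exact Hpr]]. }
    rewrite (mkGE_eq E _ _ (exist _ _ H1)) by reflexivity.
    unfold bb. rewrite (mul_c1 E _ _ _ _ _ _ []) by (simpl; auto using app_nil_r).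
    unfold xv, GE_vert. cbn [fst snd] in Hpr. rewrite <- Hpr. reflexivity. }
  set (L := flat_map (fun i => map (fun j => mkGE E (fst a, firstn i (snd a)) (fst b, firstn j (snd b)))
                                   (seq 0 (S (length (snd b)))))
                     (seq 0 (S (length (snd a))))).
  assert (HOL : forall z, O z -> In z L).
  { intros z Hz. unfold O in Hz. rewrite Exv in Hz.
    destruct z as [[[c d] H]|]; [| rewrite mul_None_r in Hz; discriminate].
    assert (Hpre : (fst c = fst a /\ exists t, snd a = snd c ++ t) /\
                   (fst d = fst b /\ exists t, snd b = snd d ++ t)).
    { revert Hz. destruct (GE_mul E ainv (Some (exist _ (c, d) H))) as [r1|] eqn:E1;
        intro Hz; [| discriminate].
      unfold ainv in E1. apply mul_spec in E1. destruct r1 as [[A' D'] H1].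
      unfold bb in Hz. apply mul_spec in Hz.
      destruct E1 as [[q [E11 [E12 E13]]]|[q [E11 [E12 E13]]]]; simpl in E13;
        injection E13 as -> ->;
      destruct Hz as [[q' [E21 [E22 E23]]]|[q' [E21 [E22 E23]]]]; simpl in E23;
        injection E23 as E23a E23b; cbn [fst snd pcat app] in E11, E12, E21, E22, E23a, E23b.
      all: try (symmetry in E23a; apply app_eq_nil in E23a as [-> ->]).
      all: try (injection E23b as E23b; symmetry in E23b).
      all: try (apply app_eq_nil in E23b as [-> ->]).
      all: try (injection E23a as E23a; symmetry in E23a; subst q).
      all: try (injection E23b as E23b; symmetry in E23b; subst q').
      all: repeat match goal with H : @eq (list _) [] ?x |- _ => is_var x; subst x end.
      all: rewrite ?app_nil_r in *.
      all: split; split; try congruence.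
      all: try (exists []; rewrite app_nil_r; congruence).
      all: try (exists q; congruence).
      all: try (exists (q ++ q'); rewrite app_assoc; congruence).
    }
    destruct Hpre as [[Hc1 [t1 Ht1]] [Hd1 [t2 Ht2]]].
    apply in_flat_map. exists (length (snd c)). split.
    - apply in_seq. rewrite Ht1, length_app. lia.
    - apply in_map_iff. exists (length (snd d)). split.
      + apply mkGE_eq. simpl. rewrite Ht1, Ht2, !firstn_pre.
        destruct c, d; simpl in *; subst; reflexivity.
      + apply in_seq. rewrite Ht2, length_app. lia. }
  destruct (sep_list (Some (exist _ (a, b) Hx)) L) as [U [HU [HUx HUL]]].
  apply (open_sing_of (fun z => O z /\ U z)).
  - apply open_inter; auto.
  - split; auto.
  - intros z [Hz1 Hz2]. apply NNPP. intro Hne. exact (HUL z (HOL z Hz1) Hne Hz2).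
Qed.


Lemma compact_P : compact X tau -> PP tau.
Proof.
  intros Hc U HU HU0.
  destruct (Hc (fun W => W = U \/ exists x, ~ U x /\ W = sing x)) as [l [Hl Hcov]].
  - intros W [->|[x [Hx ->]]]; auto. apply sing_open. intro; subst; contradiction.
  - intro z. destruct (classic (U z)) as [H|H].
    + exists U. auto.
    + exists (sing z). split; [right; eauto | reflexivity].
  - exists (map pickpt l). intros x Hx. destruct (Hcov x) as [W [HWl HWx]].
    destruct (Hl W HWl) as [->|[y [Hy ->]]]; [contradiction|].
    apply in_map_iff. exists (sing y). split; auto. unfold sing in HWx. subst. apply pickpt_sing.
Qed.

Lemma cc_P : countably_compact X tau -> PP tau.
Proof.
  intros Hcc U HU HU0. apply NNPP. intro Hnf. destruct (Hcc _ Hnf) as [x Hx].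
  destruct x as [s|].
  - destruct (Hx (sing (Some s)) (sing_open (Some s) ltac:(discriminate)) eq_refl) as [y [_ [Hy1 Hy2]]].
    exact (Hy1 Hy2).
  - destruct (Hx U HU HU0) as [y [Hy1 [_ Hy3]]]. contradiction.
Qed.

Lemma feeb_P : feebly_compact X tau -> PP tau.
Proof.
  intros Hf U HU HU0.
  destruct (Hf (fun W => exists x, ~ U x /\ W = sing x)) as [l Hl].
  - intros W [x [Hx ->]]. split.
    + apply sing_open. intro; subst; contradiction.
    + exists x. reflexivity.
  - intro z. destruct z as [s|].
    + exists (sing (Some s)). split; [apply sing_open; discriminate|]. split; [reflexivity|].
      exists [sing (Some s)]. intros V [[x [Hx ->]] [y [Hy1 Hy2]]]. unfold sing in *. subst.
      left. reflexivity.
    + exists U. split; auto. split; auto. exists [].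
      intros V [[x [Hx ->]] [y [Hy1 Hy2]]]. unfold sing in Hy2. subst. contradiction.
  - exists (map pickpt l). intros x Hx. apply in_map_iff. exists (sing x). split.
    + apply pickpt_sing.
    + apply Hl. exists x. auto.
Qed.

Lemma sing_closed x : tau (fun z => ~ sing x z).
Proof.
  apply open_local. intros z Hz.
  destruct (Hh z x Hz) as [U1 [V1 [HU1 [HV1 [HU1z [HV1x Hd]]]]]].
  exists U1. split; auto. split; auto. intros y Hy Hyx. unfold sing in Hyx. subst.
  apply (Hd x). auto.
Qed.

Lemma clp_P : CLP_compact X tau -> PP tau.
Proof.
  intros Hc U HU HU0.
  destruct (Hc (fun W => W = U \/ exists x, ~ U x /\ W = sing x)) as [l [Hl Hcov]].
  - intros W [->|[x [Hx ->]]].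
    + split; auto. apply open_local. intros z Hz. exists (sing z). split.
      * apply sing_open. intro; subst; contradiction.
      * split; [reflexivity|]. intros y Hy. unfold sing in Hy. subst. auto.
    + split.
      * apply sing_open. intro; subst; contradiction.
      * apply sing_closed.
  - intro z. destruct (classic (U z)) as [H|H].
    + exists U. auto.
    + exists (sing z). split; [right; eauto | reflexivity].
  - exists (map pickpt l). intros x Hx. destruct (Hcov x) as [W [HWl HWx]].
    destruct (Hl W HWl) as [->|[y [Hy ->]]]; [contradiction|].
    apply in_map_iff. exists (sing y). split; auto. unfold sing in HWx. subst. apply pickpt_sing.
Qed.

Lemma P_iso : PP tau -> top_iso E tau (tau_c E).
Proof.
  intros HP. exists (fun x => x), (fun x => x).
  split; [intros; reflexivity|]. split; [intros; reflexivity|]. split; [intros; reflexivity|]. split.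
  - intros V HV. apply open_local. intros x Hx. destruct x as [s|].
    + exists (sing (Some s)). split; [apply sing_open; discriminate|].
      split; [reflexivity|]. intros y Hy. unfold sing in Hy. subst. auto.
    + destruct (HV Hx) as [c Hc]. destruct (sep_list None c) as [W [HW [HWn HWc]]].
      exists W. split; auto. split; auto. intros y Hy. apply NNPP. intro Hny.
      apply (HWc y (Hc y Hny)); auto. intro; subst; contradiction.
  - unfold continuous_map, tau_c. intros V HV HV0. apply HP; auto.
Qed.

End Top.

Theorem corollary2p2 (E : graph) (tau : fam (GE E)) :
  is_topology (GE E) tau -> hausdorff (GE E) tau -> semitopological (GE E) (GE_mul E) tau ->
  (compact (GE E) tau <-> countably_compact (GE E) tau) /\
  (compact (GE E) tau <-> feebly_compact (GE E) tau) /\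
  (compact (GE E) tau <-> CLP_compact (GE E) tau) /\
  (compact (GE E) tau <-> top_iso E tau (tau_c E)).
Proof.
  intros Htop Hh Hs.
  pose proof (compact_P E tau Htop Hh Hs) as C1.
  pose proof (P_compact E tau) as C2.
  split; [|split; [|split]]; split; intro H.
  - apply P_cc. auto.
  - apply C2. apply (cc_P E tau Htop Hh Hs). auto.
  - apply P_feeb. auto.
  - apply C2. apply (feeb_P E tau Htop Hh Hs). auto.
  - apply P_clp. auto.
  - apply C2. apply (clp_P E tau Htop Hh Hs). auto.
  - apply (P_iso E tau Htop Hh Hs). auto.
  - apply (iso_compact E tau). auto.
Qed.
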